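(* Let $L\ge1$ and for $l=1,\ldots,L$ let $\mathcal{E}^{l}=\{\eta_{i}^{l},\rho_{i}^{l}\}_{i\in\mathbb{N}_{n_{l}}}$ be an ensemble on a finite-dimensional Hilbert space $\mathcal{H}_l$, and let $\mathcal{M}^{l}=\{M_{?}^{l}\}\cup\{M_{i}^{l}\}_{i\in\mathbb{N}_{n_{l}}}$ be a maximum-confidence measurement of $\mathcal{E}^{l}$. Let $\mathcal{M}=\{M_{?}\}\cup\{M_{\vec c}\}_{\vec c\in\mathbb{N}_{\vec n}}$ be a measurement on $\bigotimes_l\mathcal{H}_l$ such that $M_{\vec c}=M^{1}_{c_1}\otimes\cdots\otimes M^{L}_{c_L}$ for every $\vec c=(c_1,\ldots,c_L)\in\mathbb{N}_{\vec n}$. Then $\mathcal{M}$ is a maximum-confidence measurement of the quantum sequence ensemble $\mathcal{E}=\bigotimes_{l=1}^{L}\mathcal{E}^{l}$.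
   Context: $\mathbb{N}_{n}=\{1,\ldots,n\}$, $\mathbb{N}_{\vec n}=\mathbb{N}_{n_1}\times\cdots\times\mathbb{N}_{n_L}$. An ensemble $\mathcal{E}=\{\eta_{i},\rho_{i}\}_{i\in I}$ (finite index set $I$) on a finite-dimensional complex Hilbert space: density operators $\rho_i$ with probabilities $\eta_i>0$ summing to $1$; $\rho_0=\sum_i\eta_i\rho_i$. A measurement is $\{M_{?}\}\cup\{M_{i}\}_{i\in I}$, positive-semidefinite operators summing to the identity. $\mathcal{C}_{x}(\mathcal{E})$ is the maximum of $\eta_{x}\Tr(\rho_{x}M_{x})/\Tr(\rho_{0}M_{x})$ over measurements with $\Tr(\rho_{0}M_{x})>0$. A measurement is a maximum-confidence measurement of $\mathcal{E}$ if $\Tr[(\mathcal{C}_{i}(\mathcal{E})\rho_{0}-\eta_{i}\rho_{i})M_i]=0$ for all $i\in I$. The quantum sequence ensemble $\bigotimes_l\mathcal{E}^l$ is the ensemble on $\bigotimes_l\mathcal{H}_l$ indexed by $\mathbb{N}_{\vec n}$ with $\eta_{\vec c}=\prod_l\eta^l_{c_l}$, $\rho_{\vec c}=\bigotimes_l\rho^l_{c_l}$. *)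

(* Defs.v *)
From HB Require Import structures.
From mathcomp Require Import all_boot all_order all_algebra.
From mathcomp Require Import reals.
From mathcomp Require Export complex.
Set Implicit Arguments. Unset Strict Implicit. Unset Printing Implicit Defensive.
Import Order.TTheory GRing.Theory Num.Theory.
Local Open Scope ring_scope.

Section Quantum.
Variable C : numClosedFieldType.

(* Operators on the Hilbert space C^T, T a finite basis index type. *)
Definition op (T : finType) := T -> T -> C.

Definition op_mul (T : finType) (A B : op T) : op T :=
  fun i j => \sum_(k : T) A i k * B k j.
Definition op_add (T : finType) (A B : op T) : op T := fun i j => A i j + B i j.
Definition op_scale (T : finType) (a : C) (A : op T) : op T := fun i j => a * A i j.
Definition op_id (T : finType) : op T := fun i j => (i == j)%:R.
Definition op_tr (T : finType) (A : op T) : C := \sum_(i : T) A i i.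

(* positive semidefinite: <v, A v> >= 0 for all v (in a numClosedField,
   0 <= z means z is real and nonnegative). *)
Definition psd (T : finType) (A : op T) : Prop :=
  forall v : T -> C, 0 <= \sum_(i : T) \sum_(j : T) (v i)^* * A i j * v j.

Definition density (T : finType) (rho : op T) : Prop :=
  psd rho /\ op_tr rho = 1.

Definition ensemble (I T : finType) (eta : I -> C) (rho : I -> op T) : Prop :=
  (forall i, 0 < eta i) /\ \sum_(i : I) eta i = 1 /\ (forall i, density (rho i)).

Definition avg_state (I T : finType) (eta : I -> C) (rho : I -> op T) : op T :=
  fun a b => \sum_(i : I) eta i * rho i a b.

(* A measurement {M_?} u {M_i}_{i in I}: M None is M_?, M (Some i) is M_i. *)
Definition measurement (I T : finType) (M : option I -> op T) : Prop :=
  (forall o, psd (M o)) /\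
  (forall a b, \sum_(o : option I) M o a b = op_id a b).

Definition is_max_confidence (I T : finType) (eta : I -> C) (rho : I -> op T)
    (x : I) (c : C) : Prop :=
  (exists M : option I -> op T, measurement M /\
      0 < op_tr (op_mul (avg_state eta rho) (M (Some x))) /\
      eta x * op_tr (op_mul (rho x) (M (Some x))) /
        op_tr (op_mul (avg_state eta rho) (M (Some x))) = c) /\
  (forall M : option I -> op T, measurement M ->
      0 < op_tr (op_mul (avg_state eta rho) (M (Some x))) ->
      eta x * op_tr (op_mul (rho x) (M (Some x))) /
        op_tr (op_mul (avg_state eta rho) (M (Some x))) <= c).

Definition max_confidence_measurement (I T : finType) (eta : I -> C)
    (rho : I -> op T) (M : option I -> op T) : Prop :=
  measurement M /\
  forall i : I, exists c : C, is_max_confidence eta rho i c /\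
    op_tr (op_mul (op_add (op_scale c (avg_state eta rho))
                          (op_scale (- eta i) (rho i))) (M (Some i))) = 0.

(* Tensor products over l in 'I_L; the basis of (x)_l H_l is indexed by
   {dffun forall l, 'I_(d l)}. *)
Definition tensor_op (L : nat) (d : 'I_L -> nat) (A : forall l, op 'I_(d l))
    : op {dffun forall l : 'I_L, 'I_(d l)} :=
  fun a b => \prod_(l : 'I_L) A l (a l) (b l).

Definition seq_eta (L : nat) (n : 'I_L -> nat) (eta : forall l, 'I_(n l) -> C)
    (c : {dffun forall l : 'I_L, 'I_(n l)}) : C :=
  \prod_(l : 'I_L) eta l (c l).

Definition seq_rho (L : nat) (n d : 'I_L -> nat)
    (rho : forall l, 'I_(n l) -> op 'I_(d l))
    (c : {dffun forall l : 'I_L, 'I_(n l)}) : op {dffun forall l : 'I_L, 'I_(d l)} :=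
  tensor_op (fun l => rho l (c l)).

End Quantum.

(* Main.v *)
Require Import Defs.
From mathcomp Require Import all_boot all_order all_algebra.
From mathcomp Require Import reals complex.
From mathcomp Require Import ring.
From Stdlib Require Import IndefiniteDescription.
Import Order.TTheory GRing.Theory Num.Theory.
Local Open Scope ring_scope.


Section Psd.
Variable C : numClosedFieldType.
Variable T : finType.
Implicit Types (A : op C T) (u v w : T -> C).

Definition qf A u v := \sum_(i : T) \sum_(j : T) (u i)^* * A i j * v j.
Definition delta (p : T) : T -> C := fun k => (k == p)%:R.

Lemma psdE A : psd A <-> forall v, 0 <= qf A v v.
Proof. by []. Qed.

Lemma qfDl A u w v : qf A (fun i => u i + w i) v = qf A u v + qf A w v.
Proof.
rewrite /qf -big_split; apply: eq_bigr => i _; rewrite -big_split.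
by apply: eq_bigr => j _; rewrite rmorphD /= !mulrDl.
Qed.

Lemma qfDr A u w v : qf A v (fun i => u i + w i) = qf A v u + qf A v w.
Proof.
rewrite /qf -big_split; apply: eq_bigr => i _; rewrite -big_split.
by apply: eq_bigr => j _; rewrite !mulrDr.
Qed.

Lemma qfZl A a u v : qf A (fun i => a * u i) v = a^* * qf A u v.
Proof.
rewrite /qf big_distrr; apply: eq_bigr => i _; rewrite big_distrr.
by apply: eq_bigr => j _; rewrite rmorphM /= !mulrA.
Qed.

Lemma qfZr A a u v : qf A u (fun i => a * v i) = a * qf A u v.
Proof.
rewrite /qf big_distrr; apply: eq_bigr => i _; rewrite big_distrr.
by apply: eq_bigr => j _; rewrite mulrCA.
Qed.

Lemma sum_delta (p : T) (F : T -> C) : \sum_k (k == p)%:R * F k = F p.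
Proof.
rewrite (bigD1 p) //= eqxx mul1r big1 ?addr0 // => k /negbTE ->.
by rewrite mul0r.
Qed.

Lemma sum_delta' (p : T) (F : T -> C) : \sum_k F k * (k == p)%:R = F p.
Proof. by rewrite -(sum_delta p F); apply: eq_bigr => k _; rewrite mulrC. Qed.

Lemma qf_delta_l A p v : qf A (delta p) v = \sum_j A p j * v j.
Proof.
rewrite /qf /delta -(sum_delta p (fun i => \sum_j A i j * v j)).
apply: eq_bigr => i _; rewrite big_distrr; apply: eq_bigr => j _.
by rewrite rmorph_nat -mulrA.
Qed.

Lemma qf_delta_r A p u : qf A u (delta p) = \sum_i (u i)^* * A i p.
Proof.
rewrite /qf /delta; apply: eq_bigr => i _.
by rewrite sum_delta'.
Qed.

Lemma qf_delta A p q : qf A (delta p) (delta q) = A p q.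
Proof. by rewrite qf_delta_l /delta sum_delta'. Qed.

Lemma psd_diag A p : psd A -> 0 <= A p p.
Proof. by move=> /(_ (delta p)); rewrite -/(qf _ _ _) qf_delta. Qed.

Lemma qf_expand A a b u w :
  qf A (fun i => a * u i + b * w i) (fun i => a * u i + b * w i) =
  a^* * a * qf A u u + a^* * b * qf A u w + b^* * a * qf A w u
  + b^* * b * qf A w w.
Proof.
rewrite qfDl !qfDr !qfZl !qfZr; ring.
Qed.

Lemma psd_herm A : psd A -> forall i j, A j i = (A i j)^*.
Proof.
move=> hA i j.
have hii := psd_diag _ i hA; have hjj := psd_diag _ j hA.
have := hA (fun k => 1 * delta i k + 1 * delta j k).
rewrite -/(qf _ _ _) qf_expand !qf_delta !rmorph1 !mul1r => /geC0_conj.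
have := hA (fun k => 1 * delta i k + 'i * delta j k).
rewrite -/(qf _ _ _) qf_expand !qf_delta !rmorph1 !mul1r !mulr1 conjCi => /geC0_conj.
rewrite !rmorphD !rmorphM /= !rmorphN /= conjCi opprK.
rewrite (geC0_conj hii) (geC0_conj hjj).

set z := A i j; set w := A j i; set zc := z^*; set wc := w^*.
move=> r2 r1.
have e : 2%:R * (zc - w) =
  ((A i i + zc + wc + A j j) - (A i i + z + w + A j j))
  + 'i * ((A i i + - 'i * zc + 'i * wc + 'i * - 'i * A j j)
          - (A i i + 'i * z + - 'i * w + - 'i * 'i * A j j))
  + ('i * 'i + 1) * (zc - wc + z - w).
  ring.
move: e; rewrite r1 r2 !subrr mulCii addNr !mul0r mulr0 !addr0.
move/eqP; rewrite mulf_eq0 pnatr_eq0 /= subr_eq0 => /eqP ->.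
by [].
Qed.

Lemma psd_zero_row A p j : psd A -> A p p = 0 -> A p j = 0.
Proof.
move=> hA hpp; apply/eqP/negPn/negP => ha.
set a := A p j in ha.
have hjp : A j p = a^* by rewrite (psd_herm _ hA p j).
have hjj := psd_diag _ j hA.
have n0 : 0 < a * a^* by rewrite mul_conjC_gt0.
set r := (A j j + 1) / (a * a^*).
have r0 : 0 <= r.
  by rewrite /r divr_ge0 //; [apply: addr_ge0 | apply: ltW].
have rn : r * (a * a^*) = A j j + 1 by rewrite /r divfK // lt0r_neq0.
clearbody r.
have := hA (fun k => (- (r * a)) * delta p k + 1 * delta j k).
rewrite -/(qf _ _ _) qf_expand !qf_delta hpp hjp -/a.
rewrite !rmorphN !rmorphM /= (geC0_conj r0) rmorph1.
have -> : - (r * a^*) * - (r * a) * 0 + - (r * a^*) * 1 * a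
   + 1 * - (r * a) * a^* + 1 * 1 * A j j = - (A j j + 2%:R) + 0.
  have e : - (r * a^*) * - (r * a) * 0 + - (r * a^*) * 1 * a
   + 1 * - (r * a) * a^* + 1 * 1 * A j j
     = A j j - 2%:R * (r * (a * a^*)) by ring.
  by rewrite e rn; ring.
rewrite addr0 oppr_ge0 => h.
have : 0 < A j j + 2%:R by rewrite ltr_wpDl.
by rewrite lt_leAnge h andbF.
Qed.

Lemma qfB A B u v : qf (fun i j => A i j - B i j) u v = qf A u v - qf B u v.
Proof.
rewrite /qf -sumrB; apply: eq_bigr => i _; rewrite -sumrB.
by apply: eq_bigr => j _; rewrite mulrBr mulrBl.
Qed.

Lemma qf_rank1 (x y : T -> C) u v :
  qf (fun i j => x i * y j) u v = (\sum_i (u i)^* * x i) * (\sum_j y j * v j).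
Proof.
rewrite /qf big_distrl; apply: eq_bigr => i _ /=; rewrite big_distrr.
by apply: eq_bigr => j _ /=; rewrite !mulrA.
Qed.

Lemma gram_psd (s : seq (T -> C)) A :
  (forall i j, A i j = \sum_(f <- s) f i * (f j)^*) -> psd A.
Proof.
move=> hA v; rewrite -/(qf _ _ _).
have -> : qf A v v = \sum_(f <- s) (\sum_i (v i)^* * f i) * (\sum_i (v i)^* * f i)^*.
  rewrite /qf.
  under eq_bigr do under eq_bigr do rewrite hA big_distrr big_distrl /=.
  under eq_bigr do rewrite exchange_big /=.
  rewrite exchange_big /=; apply: eq_bigr => f _.
  rewrite big_distrl; apply: eq_bigr => i _ /=.
  rewrite rmorph_sum big_distrr; apply: eq_bigr => j _ /=.
  by rewrite rmorphM /= conjCK; ring.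
by apply: sumr_ge0 => f _; apply: mul_conjC_ge0.
Qed.

Lemma chol n : forall (S : {set T}) A, (#|S| <= n)%N -> psd A ->
  (forall i j, i \notin S -> A i j = 0) ->
  exists s : seq (T -> C), forall i j, A i j = \sum_(f <- s) f i * (f j)^*.
Proof.
have base : forall A, (forall i j, i \notin (set0 : {set T}) -> A i j = 0) ->
  exists s : seq (T -> C), forall i j, A i j = \sum_(f <- s) f i * (f j)^*.
  by move=> A h; exists [::] => i j; rewrite big_nil h // inE.
elim: n => [|n IH] S A hS hA hsupp.
  by move: hS; rewrite leqn0 cards_eq0 => /eqP hS0; subst S; apply: base.
have [hS0|[p pS]] := set_0Vmem S; first by subst S; apply: base.
have hSp : (#|S :\ p| <= n)%N.
  by move: hS; rewrite (cardsD1 p S) pS add1n ltnS.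
have [hpp|hpp] := eqVneq (A p p) 0.
  apply: (IH (S :\ p)) => // i j; rewrite !inE negb_and negbK.
  by case/orP => [/eqP -> | /hsupp ->//]; apply: psd_zero_row.
have App0 : 0 < A p p by rewrite lt_def hpp psd_diag.
have Appc : (A p p)^* = A p p by rewrite geC0_conj // ltW.
have herm := psd_herm _ hA.
pose r := sqrtC (A p p).
have rc : r^* = r by rewrite geC0_conj // sqrtC_ge0 ltW.
have rr : r * r = A p p by rewrite -expr2 sqrtCK.
have r0 : r != 0 by rewrite sqrtC_eq0.
clearbody r.
pose g := fun i => A i p / r.
have gc : forall j, (g j)^* = A p j / r.
  by move=> j; rewrite /g rmorphM /= fmorphV /= rc -herm.
pose A' := fun i j => A i j - g i * (g j)^*.
have hA' : psd A'.
  move=> v; rewrite -/(qf _ _ _) /A' qfB qf_rank1.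
  pose al := \sum_i (v i)^* * A i p.
  pose be := \sum_j A p j * v j.
  have hal : \sum_i (v i)^* * g i = al / r.
    by rewrite /al big_distrl; apply: eq_bigr => i _; rewrite /g mulrA.
  have hbe : \sum_j (g j)^* * v j = be / r.
    rewrite /be big_distrl; apply: eq_bigr => j _; rewrite gc /=.
    by rewrite mulrAC.
  have bec : be^* = al.
    rewrite /be /al rmorph_sum; apply: eq_bigr => j _.
    by rewrite rmorphM /= -herm mulrC.
  pose t := - (be / A p p).
  have tc : t^* = - (al / A p p).
    by rewrite /t rmorphN rmorphM /= fmorphV /= Appc bec.
  have := hA (fun k => 1 * v k + t * delta p k).
  rewrite -/(qf _ _ _) qf_expand qf_delta qf_delta_r qf_delta_l -/al -/be.
  rewrite tc rmorph1 hal hbe.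
  have -> : 1 * 1 * qf A v v + 1 * t * al + - (al / A p p) * 1 * be +
      - (al / A p p) * t * A p p = qf A v v - al / r * (be / r).
    rewrite /t -rr; field; by rewrite r0.
  by [].
have hsA' : forall i j, i \notin S :\ p -> A' i j = 0.
  move=> i j; rewrite !inE negb_and negbK => /orP [/eqP -> | hi].
    rewrite /A' gc /g.
    have -> : A p p / r * (A p j / r) = A p p * A p j / (r * r).
      by field.
    by rewrite rr mulrAC divff // mul1r subrr.
  by rewrite /A' /g (hsupp i j hi) (hsupp i p hi) !mul0r subr0.
have [s hs] := IH (S :\ p) A' hSp hA' hsA'.
exists (g :: s) => i j; rewrite big_cons -hs /A'; ring.
Qed.

Lemma psd_gram A : psd A ->
  exists s : seq (T -> C), forall i j, A i j = \sum_(f <- s) f i * (f j)^*.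
Proof.
move=> hA; apply: (@chol #|[set: T]| [set: T] A (leqnn _) hA) => i j; by rewrite inE.
Qed.

End Psd.
Arguments qf {C T}. Arguments delta {C T}.


Lemma big_dep_distr (R : comNzRingType) (I : finType) (T_ : I -> finType)
  (F : forall i, T_ i -> R) :
  \prod_(i : I) \sum_(j : T_ i) F i j =
  \sum_(c : {dffun forall i : I, T_ i}) \prod_(i : I) F i (c i).
Proof.
pose P_ := fun i => [ffun j : T_ i => F i j].
rewrite (reindex (@dffun_of_fprod I T_)); last first.
  by apply: onW_bij; apply: dffun_of_fprod_bij.
have := @big_fprod R 0 1 *%R +%R I T_ P_.
have -> : \sum_(t : fprod T_) \prod_i F i (dffun_of_fprod t i)
   = \sum_(t : fprod T_) \prod_(i in I) P_ i (t i).
  apply: eq_bigr => t _; apply: eq_big => // i _.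
  by rewrite /P_ !ffunE.
move=> ->.
under eq_bigr => i _ do rewrite (big_tag (fun i j => F i j) i).
rewrite bigA_distr_big_dep.
apply: eq_bigr => g _; apply: eq_bigr => i _.
rewrite /P_ /untag; case: eqP => // e.
by rewrite ffunE.
Qed.


Section Psd2.
Variable C : numClosedFieldType.

Section OneT.
Variable T : finType.
Implicit Types (A B : op C T).

Lemma psd_tr A B : psd A -> psd B -> 0 <= op_tr (op_mul A B).
Proof.
move=> hA /psd_gram [s hs].
have -> : op_tr (op_mul A B) = \sum_(f <- s) qf A f f.
  rewrite /op_tr /op_mul /qf [RHS]exchange_big /=.
  apply: eq_bigr => i _; rewrite [RHS]exchange_big /=; apply: eq_bigr => j _.
  rewrite hs big_distrr /=; apply: eq_bigr => f _; ring.
by apply: sumr_ge0 => f _; apply: hA.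
Qed.

Lemma psd_add A B : psd A -> psd B -> psd (fun i j => A i j + B i j).
Proof.
move=> hA hB v; rewrite -/(qf _ _ _).
have -> : qf (fun i j => A i j + B i j) v v = qf A v v + qf B v v.
  rewrite /qf -big_split; apply: eq_bigr => i _; rewrite -big_split.
  by apply: eq_bigr => j _; rewrite mulrDr mulrDl.
by rewrite addr_ge0 //; [apply: hA | apply: hB].
Qed.

Lemma psd_scale a A : 0 <= a -> psd A -> psd (fun i j => a * A i j).
Proof.
move=> ha hA v; rewrite -/(qf _ _ _).
have -> : qf (fun i j => a * A i j) v v = a * qf A v v.
  rewrite /qf big_distrr; apply: eq_bigr => i _; rewrite big_distrr.
  by apply: eq_bigr => j _ /=; ring.
by rewrite mulr_ge0 //; apply: hA.
Qed.

Lemma psd_ext A B : (forall i j, A i j = B i j) -> psd A -> psd B.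
Proof.
move=> e hA v; have := hA v.
by under eq_bigr do under eq_bigr do rewrite e.
Qed.

Lemma psd_hadamard A B : psd A -> psd B -> psd (fun i j => A i j * B i j).
Proof.
move=> /psd_gram [s hs] hB v; rewrite -/(qf _ _ _).
have -> : qf (fun i j => A i j * B i j) v v =
   \sum_(f <- s) qf B (fun i => (f i)^* * v i) (fun i => (f i)^* * v i).
  rewrite /qf.
  rewrite [RHS]exchange_big /=; apply: eq_bigr => i _.
  rewrite [RHS]exchange_big /=; apply: eq_bigr => j _.
  rewrite hs big_distrl /= big_distrr big_distrl /=; apply: eq_bigr => f _.
  by rewrite rmorphM /= conjCK; ring.
by apply: sumr_ge0 => f _; apply: hB.
Qed.

Lemma psd_ones : psd (fun _ _ : T => (1 : C)).
Proof.
apply: (@gram_psd _ _ [:: fun _ => 1]) => i j.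
by rewrite big_cons big_nil addr0 rmorph1 mulr1.
Qed.

Lemma psd_id : psd (@op_id C T).
Proof.
apply: (@gram_psd _ _ [seq delta p | p <- enum T]) => i j.
rewrite big_map /op_id /delta big_enum /=.
rewrite (bigD1 i) //= eqxx rmorph_nat mul1r big1 ?addr0.
  by rewrite eq_sym.
by move=> k /negbTE hk; rewrite eq_sym hk mul0r.
Qed.

End OneT.
Arguments psd_ext {T A B}. Arguments psd_add {T A B}. Arguments psd_hadamard {T A B}.
Arguments psd_ones {T}. Arguments psd_scale {T a A}. Arguments psd_tr {T A B}.

Section Tensor.
Variable I : finType.
Variable T_ : I -> finType.
Notation TT := {dffun forall i : I, T_ i}.

Lemma psd_lift (l : I) (A : op C (T_ l)) :
  psd A -> psd (fun a b : TT => A (a l) (b l)).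
Proof.
move=> /psd_gram [s hs].
apply: (@gram_psd _ _ [seq (fun a : TT => f (a l)) | f <- s]) => a b.
by rewrite big_map hs.
Qed.

Lemma psd_prod_seq (r : seq I) (A : forall l, op C (T_ l)) :
  (forall l, psd (A l)) ->
  psd (fun a b : TT => \prod_(l <- r) A l (a l) (b l)).
Proof.
move=> hA; elim: r => [|p r IH].
  by apply: (psd_ext _ psd_ones) => a b; rewrite big_nil.
apply: (psd_ext _ (psd_hadamard (@psd_lift p _ (hA p)) IH)) => a b.
by rewrite big_cons.
Qed.

Lemma psd_prod_diff (r : seq I) (A B : forall l, op C (T_ l)) :
  (forall l, psd (B l)) -> (forall l, psd (fun x y => A l x y - B l x y)) ->
  psd (fun a b : TT => \prod_(l <- r) A l (a l) (b l)
                     - \prod_(l <- r) B l (a l) (b l)).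
Proof.
move=> hB hAB.
have hA : forall l, psd (A l).
  move=> l; apply: (psd_ext _ (psd_add (hAB l) (hB l))) => x y.
  by rewrite subrK.
elim: r => [|p r IH].
  apply: (@psd_ext _ (fun _ _ => 0)).
    by move=> a b; rewrite !big_nil subrr.
  by move=> v; rewrite -/(qf _ _ _) /qf big1 // => i _; rewrite big1 // => j _; rewrite mulr0 mul0r.
apply: (psd_ext _ (psd_add (psd_hadamard (@psd_lift p _ (hAB p)) (@psd_prod_seq r _ hA))
                           (psd_hadamard (@psd_lift p _ (hB p)) IH))) => a b /=.
rewrite !big_cons; ring.
Qed.

End Tensor.
End Psd2.


Section Single.
Variable C : numClosedFieldType.

Lemma sum_option (I : finType) (F : option I -> C) :
  \sum_(o : option I) F o = F None + \sum_(i : I) F (Some i).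
Proof.
rewrite (bigD1 None) //=; congr (_ + _).
rewrite (reindex_omap Some (fun o => o)); last by case.
by apply: eq_bigl => i; rewrite eqxx.
Qed.

Variable T : finType.
Implicit Types (A B : op C T).

Lemma tr_lin a b A B Z : op_tr (op_mul (op_add (op_scale a A) (op_scale b B)) Z)
  = a * op_tr (op_mul A Z) + b * op_tr (op_mul B Z).
Proof.
rewrite /op_tr /op_mul /op_add /op_scale !big_distrr -big_split.
apply: eq_bigr => i _ /=; rewrite !big_distrr -big_split.
by apply: eq_bigr => j _ /=; ring.
Qed.

Lemma tr_ext A A' B B' : (forall i j, A i j = A' i j) -> (forall i j, B i j = B' i j) ->
  op_tr (op_mul A B) = op_tr (op_mul A' B').
Proof.
move=> eA eB; rewrite /op_tr /op_mul; apply: eq_bigr => i _.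
by apply: eq_bigr => j _; rewrite eA eB.
Qed.

Lemma qfZ a A u v : qf (fun i j => a * A i j) u v = a * qf A u v.
Proof.
rewrite /qf big_distrr; apply: eq_bigr => i _; rewrite big_distrr.
by apply: eq_bigr => j _ /=; ring.
Qed.

Lemma qf_sum (I : finType) (F : I -> op C T) u v :
  qf (fun i j => \sum_k F k i j) u v = \sum_k qf (F k) u v.
Proof.
rewrite /qf [RHS]exchange_big /=; apply: eq_bigr => i _.
rewrite [RHS]exchange_big /=; apply: eq_bigr => j _.
by rewrite big_distrr big_distrl.
Qed.

Lemma qf_id u v : qf (@op_id C T) u v = \sum_i (u i)^* * v i.
Proof.
rewrite /qf /op_id; apply: eq_bigr => i _.
rewrite (bigD1 i) //= eqxx mulr1 big1 ?addr0 // => j /negbTE.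
by rewrite eq_sym => ->; rewrite mulr0 mul0r.
Qed.

Lemma tr_rank1 A k v :
  op_tr (op_mul A (fun a b => k * (v a * (v b)^*))) = k * qf A v v.
Proof.
rewrite /op_tr /op_mul /qf big_distrr; apply: eq_bigr => i _.
rewrite big_distrr; apply: eq_bigr => j _ /=; ring.
Qed.

Lemma psd_sum (I : finType) (F : I -> op C T) :
  (forall k, psd (F k)) -> psd (fun i j => \sum_k F k i j).
Proof.
move=> hF v; rewrite -/(qf _ _ _) qf_sum.
by apply: sumr_ge0 => k _; apply: hF.
Qed.

Lemma meas_compl (I : finType) (M : option I -> op C T) x :
  measurement M -> psd (fun i j => op_id C i j - M (Some x) i j).
Proof.
move=> [hps hsum].
apply: (@psd_ext _ _ (fun i j => \sum_(o | o != Some x) M o i j)).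
  move=> i j; rewrite -(hsum i j) [X in _ = X - _](bigD1 (Some x)) //=.
  by rewrite addrAC subrr add0r.
move=> v; rewrite -/(qf _ _ _).
have -> : qf (fun i j => \sum_(o | o != Some x) M o i j) v v
    = \sum_(o | o != Some x) qf (M o) v v.
  rewrite /qf [RHS]exchange_big /=; apply: eq_bigr => i _.
  rewrite [RHS]exchange_big /=; apply: eq_bigr => j _.
  by rewrite big_distrr big_distrl.
by apply: sumr_ge0 => o _; apply: hps.
Qed.

Lemma avg_psd (I : finType) (eta : I -> C) (rho : I -> op C T) :
  ensemble eta rho -> psd (avg_state eta rho).
Proof.
move=> [he [_ hr]]; apply: psd_sum => k.
by apply: psd_scale; [apply: ltW | case: (hr k)].
Qed.

Lemma psd_D (I : finType) (eta : I -> C) (rho : I -> op C T) x Cx :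
  ensemble eta rho -> is_max_confidence eta rho x Cx ->
  psd (fun i j => Cx * avg_state eta rho i j - eta x * rho x i j).
Proof.
move=> hens [_ hub].
have havg := @avg_psd _ eta rho hens.
case: hens => [he [_ hr]].
have hrho : forall k, psd (rho k) by move=> k; case: (hr k).
move=> v; rewrite -/(qf _ _ _) qfB !qfZ.
set qa := qf (avg_state eta rho) v v.
set qr := qf (rho x) v v.
have hqa : qa = \sum_k eta k * qf (rho k) v v.
  by rewrite /qa /avg_state qf_sum; apply: eq_bigr => k _; rewrite qfZ.
have qa0 : 0 <= qa by apply: havg.
have [qaz|qanz] := eqVneq qa 0.
  have h : eta x * qr = 0.
    apply: (@psumr_eq0P _ _ predT (fun k => eta k * qf (rho k) v v)) => //.
      move=> k _; apply: mulr_ge0; [exact: ltW | exact: hrho].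
    by rewrite -hqa.
  by rewrite qaz mulr0 h subrr.
have qapos : 0 < qa by rewrite lt_def qanz.
pose s := \sum_i (v i)^* * v i.
have s0 : 0 < s.
  rewrite lt_def sumr_ge0 ?andbT; last by move=> i _; rewrite mulrC mul_conjC_ge0.
  apply/negP => /eqP hs.
  have hv : forall i, v i = 0.
    have hge : forall j, predT j -> 0 <= (v j)^* * v j.
      by move=> j _; rewrite mulrC mul_conjC_ge0.
    move=> i; have := psumr_eq0P hge hs (i:=i) isT.
    by move/eqP; rewrite mulf_eq0 conjC_eq0 orbb => /eqP.
  move/eqP: qanz; apply; rewrite /qa /qf big1 // => i _.
  by rewrite big1 // => j _; rewrite !hv mulr0.
have sc : s^* = s by rewrite geC0_conj // ltW.
pose P := fun a b : T => s^-1 * (v a * (v b)^*).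
pose N := fun o : option I => match o with
  | None => fun a b => op_id C a b - P a b
  | Some y => if y == x then P else fun _ _ => 0 end.
have hP : psd P.
  apply: psd_scale; first by rewrite invr_ge0 ltW.
  apply: (@gram_psd _ _ [:: v]) => a b; by rewrite big_cons big_nil addr0.
have hIP : psd (fun a b => op_id C a b - P a b).
  move=> u; rewrite -/(qf _ _ _) qfB /P qfZ qf_rank1 qf_id.
  pose al := \sum_i (u i)^* * v i.
  pose z := \sum_j (v j)^* * u j.
  have zc : z^* = al.
    rewrite /z /al rmorph_sum; apply: eq_bigr => j _.
    by rewrite rmorphM /= conjCK mulrC.
  pose t := - (z / s).
  have tc : t^* = - (al / s) by rewrite /t rmorphN rmorphM /= fmorphV /= sc zc.
  have := @psd_id C T (fun k => 1 * u k + t * v k).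
  rewrite -/(qf _ _ _) qf_expand !qf_id tc rmorph1.
  rewrite -/al -/z -/s.
  have -> : 1 * 1 * \sum_i (u i)^* * u i + 1 * t * al + - (al / s) * 1 * z +
     - (al / s) * t * s = \sum_i (u i)^* * u i - s^-1 * (al * z).
    by rewrite /t; field; rewrite lt0r_neq0.
  by [].
have hN : measurement N.
  split.
    case => [y|] //=; case: eqP => // _ w.
    by rewrite -/(qf _ _ _) /qf big1 // => i _; rewrite big1 // => j _; rewrite mulr0 mul0r.
  move=> a b; rewrite sum_option /= (bigD1 x) //= eqxx big1 ?addr0.
    by rewrite subrK.
  by move=> y /negbTE ->.
have htr : op_tr (op_mul (avg_state eta rho) (N (Some x))) = s^-1 * qa.
  by rewrite /= eqxx tr_rank1.
have htr' : op_tr (op_mul (rho x) (N (Some x))) = s^-1 * qr.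
  by rewrite /= eqxx tr_rank1.
have := hub N hN; rewrite htr htr' => /(_ _).
have pos : 0 < s^-1 * qa by rewrite mulr_gt0 // invr_gt0.
move=> /(_ pos).
have -> : eta x * (s^-1 * qr) / (s^-1 * qa) = eta x * qr / qa.
  by field; rewrite qanz lt0r_neq0.
by rewrite ler_pdivrMr // subr_ge0 mulrC.
Qed.

End Single.


Lemma fin_choice (A : Type) (B : A -> Type) (P : forall a, B a -> Prop) :
  (forall a, exists b, P a b) -> exists f : forall a, B a, forall a, P a (f a).
Proof.
move=> h; exists (fun a => proj1_sig (constructive_indefinite_description _ (h a))).
by move=> a; case: (constructive_indefinite_description _ (h a)).
Qed.

Section Main.
Variable C : numClosedFieldType.
Variable L : nat.
Variable d : 'I_L -> nat.
Notation TT := {dffun forall l : 'I_L, 'I_(d l)}.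

Lemma tensor_tr (A B : forall l, op C 'I_(d l)) :
  op_tr (op_mul (tensor_op A) (tensor_op B)) = \prod_l op_tr (op_mul (A l) (B l)).
Proof.
rewrite /op_tr /op_mul /tensor_op.
rewrite [RHS](@big_dep_distr _ _ _ (fun l x => \sum_k A l x k * B l k x)).
apply: eq_bigr => a _.
rewrite (@big_dep_distr _ _ _ (fun l k => A l (a l) k * B l k (a l))).
by apply: eq_bigr => b _; rewrite big_split.
Qed.

Lemma id_tensor (a b : TT) : op_id C a b = \prod_l op_id C (a l) (b l).
Proof.
rewrite /op_id; case: (eqVneq a b) => [->|neq].
  by rewrite big1 // => l _; rewrite eqxx.
have [l hl] : exists l, a l != b l.
  apply/existsP; rewrite -negb_forall; apply: contra neq => /forallP h.
  by apply/eqP/ffunP => l; apply/eqP/h.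
by rewrite (bigD1 l) //= (negbTE hl) mul0r.
Qed.

Lemma tensor_ext (A B : forall l, op C 'I_(d l)) :
  (forall l x y, A l x y = B l x y) -> forall a b, tensor_op A a b = tensor_op B a b.
Proof. by move=> e a b; rewrite /tensor_op; apply: eq_bigr => l _; rewrite e. Qed.

Lemma psd_tensor (A : forall l, op C 'I_(d l)) :
  (forall l, psd (A l)) -> psd (tensor_op A).
Proof. by move=> h; apply: (@psd_prod_seq C _ _ (index_enum _) A h). Qed.

End Main.


Lemma tr_sub_scale (C : numClosedFieldType) (T : finType) (k1 k2 : C) (X Y N : op C T) :
  op_tr (op_mul (fun a b => k1 * X a b - k2 * Y a b) N)
  = k1 * op_tr (op_mul X N) - k2 * op_tr (op_mul Y N).
Proof.
rewrite /op_tr /op_mul !big_distrr -sumrB; apply: eq_bigr => i _.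
rewrite !big_distrr -sumrB; apply: eq_bigr => j _ /=; ring.
Qed.

Theorem main_gen (C : numClosedFieldType) (L : nat) (n d : 'I_L -> nat)
    (eta : forall l, 'I_(n l) -> C)
    (rho : forall l, 'I_(n l) -> op C 'I_(d l))
    (Ml : forall l, option 'I_(n l) -> op C 'I_(d l))
    (M : option {dffun forall l : 'I_L, 'I_(n l)} ->
           op C {dffun forall l : 'I_L, 'I_(d l)}) :
  (forall l, ensemble (eta l) (rho l)) ->
  (forall l, max_confidence_measurement (eta l) (rho l) (Ml l)) ->
  measurement M ->
  (forall c : {dffun forall l : 'I_L, 'I_(n l)},
      M (Some c) = tensor_op (fun l => Ml l (Some (c l)))) ->
  max_confidence_measurement (seq_eta eta) (seq_rho rho) M.
Proof.
move=> hens hmc hM hMc; split => // c.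
pose avgl := fun l => avg_state (eta l) (rho l).
have havg : forall a b, avg_state (seq_eta eta) (seq_rho rho) a b = tensor_op avgl a b.
  move=> a b; rewrite /avg_state /tensor_op /avgl /seq_eta /seq_rho /tensor_op /avg_state.
  rewrite (@big_dep_distr _ _ (fun l => 'I_(n l)) (fun l i => eta l i * rho l i (a l) (b l))).
  by apply: eq_bigr => e _; rewrite big_split.
have trv : forall X, op_tr (op_mul (avg_state (seq_eta eta) (seq_rho rho)) X)
                   = op_tr (op_mul (tensor_op avgl) X).
  by move=> X; apply: tr_ext.
have [Cl hCl] := @fin_choice 'I_L (fun _ => C)
  (fun l x => is_max_confidence (eta l) (rho l) (c l) x /\
    op_tr (op_mul (op_add (op_scale x (avg_state (eta l) (rho l)))
                          (op_scale (- eta l (c l)) (rho l (c l)))) (Ml l (Some (c l)))) = 0)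
  (fun l => (proj2 (hmc l)) (c l)).
have hpos : forall l (i : 'I_(n l)), 0 < eta l i by move=> l i; case: (hens l) => h _; apply: h.
have hrho : forall l (i : 'I_(n l)), psd (rho l i).
  by move=> l i; case: (hens l) => _ [_ h]; case: (h i).
exists (\prod_l Cl l); split; [split|].
- have [Nl hNl] := @fin_choice 'I_L (fun l => option 'I_(n l) -> op C 'I_(d l))
    (fun l N => measurement N /\
      0 < op_tr (op_mul (avg_state (eta l) (rho l)) (N (Some (c l)))) /\
      eta l (c l) * op_tr (op_mul (rho l (c l)) (N (Some (c l)))) /
        op_tr (op_mul (avg_state (eta l) (rho l)) (N (Some (c l)))) = Cl l)
    (fun l => (hCl l).1.1).
  pose P := fun l => Nl l (Some (c l)).
  have hP : forall l, psd (P l) by move=> l; case: (hNl l) => [[h _] _]; apply: h.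
  have hIP : forall l, psd (fun x y => op_id C x y - P l x y).
    by move=> l; apply: meas_compl; case: (hNl l).
  pose N := fun o => match o with
    | None => fun a b => op_id C a b - tensor_op P a b
    | Some c' => if c' == c then tensor_op P else fun _ _ => 0 end.
  exists N; split; [|split].
  + split.
      case => [c'|] /=.
        case: eqP => _; first by apply: psd_tensor.
        move=> v; rewrite -/(qf _ _ _) /qf big1 // => i _.
        by rewrite big1 // => j _; rewrite mulr0 mul0r.
      apply: (psd_ext _ _ _ _ _ (@psd_prod_diff C _ (fun l => ordinal (d l)) (index_enum _) (fun l => @op_id C _) P hP hIP)).
      by move=> a b; rewrite id_tensor.
    move=> a b; rewrite sum_option /= (bigD1 c) //= eqxx big1 ?addr0.
      by rewrite subrK.
    by move=> y /negbTE ->.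
  + rewrite /= eqxx trv tensor_tr; apply: prodr_gt0 => l _.
    by case: (hNl l) => _ [h _].
  + rewrite /= eqxx trv tensor_tr /seq_eta /seq_rho tensor_tr -big_split -prodf_div.
    by apply: eq_bigr => l _; case: (hNl l) => _ [_ h].
- move=> N hN hNpos.
  rewrite ler_pdivrMr // -subr_ge0.
  have hD := fun l => psd_D _ _ _ _ _ _ _ (hens l) (hCl l).1.
  have hB : forall l, psd (fun x y => eta l (c l) * rho l (c l) x y).
    by move=> l; apply: psd_scale; [apply: ltW | apply: hrho].
  have := psd_tr _ _ _ _ (psd_prod_diff _ _ _ (index_enum _) (fun l x y => Cl l * avgl l x y) _ hB hD)
            (proj1 hN (Some c)).
  have -> : op_tr (op_mul (fun a b : {dffun forall l : 'I_L, 'I_(d l)} =>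
       \prod_(l <- index_enum 'I_L) (Cl l * avgl l (a l) (b l)) -
       \prod_(l <- index_enum 'I_L) (eta l (c l) * rho l (c l) (a l) (b l))) (N (Some c)))
     = op_tr (op_mul (fun a b => (\prod_l Cl l) * avg_state (seq_eta eta) (seq_rho rho) a b
                  - seq_eta eta c * seq_rho rho c a b) (N (Some c))).
    apply: tr_ext => // a b; rewrite havg /tensor_op /seq_eta /seq_rho /tensor_op.
    by rewrite !big_split.
  by rewrite tr_sub_scale mulrC.
- rewrite tr_lin hMc trv !tensor_tr /seq_eta -!big_split /=.
  have e : forall l : 'I_L, Cl l * op_tr (op_mul (avgl l) (Ml l (Some (c l))))
     = eta l (c l) * op_tr (op_mul (rho l (c l)) (Ml l (Some (c l)))).
    move=> l; have := (hCl l).2; rewrite tr_lin mulNr.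
    by move/eqP; rewrite subr_eq0 => /eqP.
  under eq_bigr do rewrite e.
  by rewrite mulNr -big_split addrN.
Qed.


Theorem theorem5 (R : realType) (L : nat) (n d : 'I_L -> nat)
    (eta : forall l, 'I_(n l) -> R[i])
    (rho : forall l, 'I_(n l) -> op R[i] 'I_(d l))
    (Ml : forall l, option 'I_(n l) -> op R[i] 'I_(d l))
    (M : option {dffun forall l : 'I_L, 'I_(n l)} ->
           op R[i] {dffun forall l : 'I_L, 'I_(d l)}) :
  (0 < L)%N ->
  (forall l, ensemble (eta l) (rho l)) ->
  (forall l, max_confidence_measurement (eta l) (rho l) (Ml l)) ->
  measurement M ->
  (forall c : {dffun forall l : 'I_L, 'I_(n l)},
      M (Some c) = tensor_op (fun l => Ml l (Some (c l)))) ->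
  max_confidence_measurement (seq_eta eta) (seq_rho rho) M.
Proof.
move=> _; exact: main_gen.
Qed.
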